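(* Fix $0<B<1$ and $H>0$, let $x(s),z(s)$ be as follows: $$x(s)=\frac1H\sqrt{1+B^2+2B\sin\!\big(Hs+\tfrac{3\pi}{2}\big)},\qquad z(s)=\int_{3\pi/(2H)}^{\,s+3\pi/(2H)}\frac{1+B\sin(Ht)}{\sqrt{1+B^2+2B\sin(Ht)}}\,dt ,$$ let $s_0=\frac1H\arccos B$ be the smallest positive zero of $x''$, let $g(s)=x(s)-\frac{x'(s)}{z'(s)}z(s)$, and set $z_0=\frac{1-B^2}{HB}$. Then: (i) if $z(s_0)<z_0$, then $g(s)>0$ for all $s\in(0,s_0)$; (ii) if $z(s_0)\ge z_0$, then there is $\bar s\in(0,s_0]$ with $g(\bar s)=g(-\bar s)=0$; with $R_0^2=x(\bar s)^2+z(\bar s)^2$, the surface $\Sigma$ obtained by rotating $\beta|_{[-\bar s,\bar s]}$, $\beta=(x,0,z)$, about the $z$-axis is a free boundary CMC annulus in the ball $\mathbb B^3_{R_0}$ of radius $R_0$ centered at the origin, and it satisfies, at every point, $$|\Phi|^2\langle\vec x,N\rangle^2\le\tfrac12\big(2+H\langle\vec x,N\rangle\big)^2,$$ with $N=(-z'\cos\theta,-z'\sin\theta,x')$ at the point $(x(s)\cos\theta,x(s)\sin\theta,z(s))$.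
   Context: Free boundary in a ball $\mathbb B^3_{R}$: interior in the open ball, boundary on the sphere of radius $R$, meeting it orthogonally. Conventions: shape operator $A$ w.r.t. $N$ defined by $\langle A(Y),Z\rangle=\langle\bar\nabla_YZ,N\rangle$; mean curvature $H=\operatorname{tr}A$ (unnormalized; for this unduloid it equals the constant $H$); $\Phi=\Pi-\frac H2g_\Sigma$, $|\Phi|^2=|A|^2-H^2/2$; $\vec x$ the position vector. *)

(* Defs.v *)
From Stdlib Require Import Reals Lra ClassicalEpsilon.
Open Scope R_scope.

(** Total versions of the derivative and of the Riemann integral, chosen by
    Hilbert's epsilon.  When [f] is differentiable at [s] (resp. Riemann
    integrable on [a,b]) these are the usual derivative (resp. integral, with
    orientation: [RInt f b a = - RInt f a b]). *)
Definition deriv (f : R -> R) (s : R) : R :=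
  epsilon (inhabits 0) (fun l => derivable_pt_lim f s l).

Definition RInt (f : R -> R) (a b : R) : R :=
  epsilon (inhabits 0)
    (fun I => forall pr : Riemann_integrable f a b, RiemannInt pr = I).

Definition xu (B H s : R) : R :=
  / H * sqrt (1 + B ^ 2 + 2 * B * sin (H * s + 3 * PI / 2)).

Definition zu_integrand (B H t : R) : R :=
  (1 + B * sin (H * t)) / sqrt (1 + B ^ 2 + 2 * B * sin (H * t)).

Definition zu (B H s : R) : R :=
  RInt (zu_integrand B H) (3 * PI / (2 * H)) (s + 3 * PI / (2 * H)).

Definition s0 (B H : R) : R := / H * acos B.

Definition gu (B H s : R) : R :=
  xu B H s - deriv (xu B H) s / deriv (zu B H) s * zu B H s.

Definition z0 (B H : R) : R := (1 - B ^ 2) / (H * B).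

Definition V3 : Type := (R * R * R)%type.
Definition mk3 (a b c : R) : V3 := (a, b, c).
Definition c1 (v : V3) : R := fst (fst v).
Definition c2 (v : V3) : R := snd (fst v).
Definition c3 (v : V3) : R := snd v.
Definition dot (u v : V3) : R := c1 u * c1 v + c2 u * c2 v + c3 u * c3 v.

Definition d_s (X : R -> R -> V3) (s th : R) : V3 :=
  mk3 (deriv (fun u => c1 (X u th)) s)
      (deriv (fun u => c2 (X u th)) s)
      (deriv (fun u => c3 (X u th)) s).
Definition d_th (X : R -> R -> V3) (s th : R) : V3 :=
  mk3 (deriv (fun u => c1 (X s u)) th)
      (deriv (fun u => c2 (X s u)) th)
      (deriv (fun u => c3 (X s u)) th).

Definition fE X s th := dot (d_s X s th) (d_s X s th).
Definition fF X s th := dot (d_s X s th) (d_th X s th).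
Definition fG X s th := dot (d_th X s th) (d_th X s th).

(** Second fundamental form w.r.t. the normal field N, with the convention
    <A(Y),Z> = <Dbar_Y Z, N>, i.e. II_ij = <X_ij, N>. *)
Definition IIss X (N : R -> R -> V3) s th := dot (d_s (d_s X) s th) (N s th).
Definition IIst X (N : R -> R -> V3) s th := dot (d_th (d_s X) s th) (N s th).
Definition IIts X (N : R -> R -> V3) s th := dot (d_s (d_th X) s th) (N s th).
Definition IItt X (N : R -> R -> V3) s th := dot (d_th (d_th X) s th) (N s th).

(** Shape operator matrix W = g^{-1} II (acting on coordinates) *)
Definition detg X s th := fE X s th * fG X s th - fF X s th ^ 2.
Definition W11 X N s th :=
  (fG X s th * IIss X N s th - fF X s th * IIts X N s th) / detg X s th.
Definition W12 X N s th :=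
  (fG X s th * IIst X N s th - fF X s th * IItt X N s th) / detg X s th.
Definition W21 X N s th :=
  (- fF X s th * IIss X N s th + fE X s th * IIts X N s th) / detg X s th.
Definition W22 X N s th :=
  (- fF X s th * IIst X N s th + fE X s th * IItt X N s th) / detg X s th.

(** Mean curvature H = tr A (unnormalized) *)
Definition meanH X N s th := W11 X N s th + W22 X N s th.
(** |A|^2 = tr (A^2) *)
Definition normA2 X N s th :=
  W11 X N s th ^ 2 + 2 * W12 X N s th * W21 X N s th + W22 X N s th ^ 2.
(** |Phi|^2 = |A|^2 - H^2/2, Phi = II - (H/2) g *)
Definition normPhi2 X N s th := normA2 X N s th - meanH X N s th ^ 2 / 2.

Definition rev (x z : R -> R) (s th : R) : V3 :=
  mk3 (x s * cos th) (x s * sin th) (z s).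
Definition revN (x z : R -> R) (s th : R) : V3 :=
  mk3 (- deriv z s * cos th) (- deriv z s * sin th) (deriv x s).

(** The surface obtained by rotating beta|[-a,a] about the z-axis is a
    free boundary CMC annulus (mean curvature Hc w.r.t. N = revN) in the
    ball of radius R0 centred at the origin:
    - it is an (embedded) annulus: a > 0, x > 0 on [-a,a], beta injective
      on [-a,a], and the parametrization is an immersion with N a unit normal;
    - constant mean curvature Hc at every point;
    - interior in the open ball, boundary (s = -a, a) on the sphere;
    - it meets the sphere orthogonally along the boundary (N is tangent to
      the sphere there, i.e. <x_vec, N> = 0). *)
Definition free_boundary_CMC_annulus_rev (x z : R -> R) (a Hc R0 : R) : Prop :=
  let X := rev x z in
  let N := revN x z in
  0 < a /\ 0 < R0 /\
  (forall s, -a <= s <= a -> 0 < x s) /\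
  (forall s1 s2, -a <= s1 <= a -> -a <= s2 <= a ->
      x s1 = x s2 -> z s1 = z s2 -> s1 = s2) /\
  (forall s th, -a <= s <= a ->
      0 < detg X s th /\
      dot (N s th) (N s th) = 1 /\
      dot (N s th) (d_s X s th) = 0 /\
      dot (N s th) (d_th X s th) = 0) /\
  (forall s th, -a <= s <= a -> meanH X N s th = Hc) /\
  (forall s th, -a < s < a -> dot (X s th) (X s th) < R0 ^ 2) /\
  (forall th, dot (X a th) (X a th) = R0 ^ 2 /\
              dot (X (-a) th) (X (-a) th) = R0 ^ 2) /\
  (forall th, dot (X a th) (N a th) = 0 /\ dot (X (-a) th) (N (-a) th) = 0).

(* Main.v *)
Require Import Defs.
From Stdlib Require Import Reals Lra ClassicalEpsilon FunctionalExtensionality.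
From Coquelicot Require Import Coquelicot.
Open Scope R_scope.

Lemma deriv_eq (f : R -> R) s l : is_derive f s l -> deriv f s = l.
Proof.
  intro Hd. apply is_derive_Reals in Hd. unfold deriv.
  pose proof (epsilon_spec (inhabits 0) (fun l => derivable_pt_lim f s l) (ex_intro _ l Hd)) as He.
  simpl in He. exact (uniqueness_limite f s _ _ He Hd).
Qed.

Lemma RInt_eq (f : R -> R) a b (pr : Riemann_integrable f a b) :
  Defs.RInt f a b = RiemannInt pr.
Proof.
  unfold Defs.RInt.
  assert (Ex : exists I, forall pr' : Riemann_integrable f a b, RiemannInt pr' = I).
  { exists (RiemannInt pr). intro pr'. apply RiemannInt_P5. }
  pose proof (epsilon_spec (inhabits 0) _ Ex) as He. simpl in He.
  symmetry. apply He.
Qed.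

Lemma RInt_same (f : R -> R) a b :
  (forall t, continuity_pt f t) -> Defs.RInt f a b = RInt f a b.
Proof.
  intro Hc.
  assert (pr : Riemann_integrable f a b).
  { destruct (Rle_lt_dec a b).
    - apply continuity_implies_RiemannInt; auto.
    - apply RiemannInt_P1, continuity_implies_RiemannInt; auto; lra. }
  rewrite (RInt_eq f a b pr). symmetry. apply RInt_Reals.
Qed.
Definition DD (B H s : R) := 1 + B^2 - 2*B*cos(H*s).
Definition rr B H s := sqrt (DD B H s).

Lemma DD_pos B H s : 0 < B < 1 -> 0 < DD B H s.
Proof. intros. unfold DD. pose proof (COS_bound (H*s)). nra. Qed.

Lemma rr_pos B H s : 0 < B < 1 -> 0 < rr B H s.
Proof. intros. apply sqrt_lt_R0, DD_pos; auto. Qed.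

Lemma rr_sq B H s : 0 < B < 1 -> rr B H s * rr B H s = DD B H s.
Proof. intros. apply sqrt_sqrt. left; apply DD_pos; auto. Qed.

Lemma rr_der B H s : 0 < B < 1 -> is_derive (rr B H) s (B*H*sin(H*s) / rr B H s).
Proof.
  intros hB. pose proof (DD_pos B H s hB) as hD. unfold rr. unfold DD in *.
  auto_derive.
  - replace (1 + B * (B * 1) + - (2 * B * cos (H * s))) with (1 + B^2 - 2*B*cos(H*s)) by ring. exact hD.
  - replace (1 + B * (B * 1) + - (2 * B * cos (H * s))) with (1 + B^2 - 2*B*cos(H*s)) by ring.
    pose proof (sqrt_lt_R0 _ hD). field. lra.
Qed.
Definition X0 B H s := / H * rr B H s.
Definition XP B H s := B * sin (H*s) / rr B H s.
Definition ZP B H s := (1 - B * cos (H*s)) / rr B H s.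
Definition XPP B H s := B*H*cos(H*s) / rr B H s - B*sin(H*s) * (B*H*sin(H*s)) / (rr B H s)^3.
Definition ZPP B H s := B*H*sin(H*s) / rr B H s - (1 - B*cos(H*s)) * (B*H*sin(H*s)) / (rr B H s)^3.

Ltac rrD B H s hB :=
  let E := fresh in
  assert (E : Derive (fun x => rr B H x) s = B*H*sin(H*s) / rr B H s)
    by (apply is_derive_unique; apply rr_der; exact hB);
  pose proof (rr_pos B H s hB).

Lemma X0_der B H s : 0 < B < 1 -> H <> 0 -> is_derive (X0 B H) s (XP B H s).
Proof.
  intros hB hH. unfold X0, XP. rrD B H s hB. auto_derive.
  - eexists; apply rr_der; exact hB.
  - rewrite H0. field. split; lra.
Qed.

Lemma XP_der B H s : 0 < B < 1 -> is_derive (XP B H) s (XPP B H s).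
Proof.
  intros hB. unfold XP, XPP. rrD B H s hB. auto_derive.
  - repeat match goal with |- _ /\ _ => split end; try lra; try (eexists; apply rr_der; exact hB).
  - rewrite H0. field. lra.
Qed.

Lemma ZP_der B H s : 0 < B < 1 -> is_derive (ZP B H) s (ZPP B H s).
Proof.
  intros hB. unfold ZP, ZPP. rrD B H s hB. auto_derive.
  - repeat match goal with |- _ /\ _ => split end; try lra; try (eexists; apply rr_der; exact hB).
  - rewrite H0. field. lra.
Qed.

Lemma sin_shift x : sin (x + 3*PI/2) = - cos x.
Proof.
  rewrite sin_plus. replace (3*PI/2) with (3*(PI/2)) by field.
  rewrite cos_3PI2, sin_3PI2. ring.
Qed.

Lemma integrand_pos B H t : 0 < B < 1 -> 0 < 1 + B^2 + 2*B*sin(H*t).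
Proof. intros. pose proof (SIN_bound (H*t)). nra. Qed.

Lemma integrand_cont B H t : 0 < B < 1 -> continuity_pt (zu_integrand B H) t.
Proof.
  intros hB. apply continuity_pt_filterlim. apply (ex_derive_continuous (K:=R_AbsRing) (V:=R_NormedModule)).
  unfold zu_integrand. pose proof (integrand_pos B H t hB) as hp.
  auto_derive. replace (1 + B * (B * 1) + 2 * B * sin (H * t)) with (1 + B^2 + 2*B*sin(H*t)) by ring.
  pose proof (sqrt_lt_R0 _ hp). repeat split; lra.
Qed.

Definition cc H := 3*PI/(2*H).
Definition Zf B H s := RInt (zu_integrand B H) (cc H) (s + cc H).

Lemma zu_Zf B H : 0 < B < 1 -> zu B H = Zf B H.
Proof.
  intros hB. apply functional_extensionality. intro s. unfold zu, Zf, cc.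
  apply RInt_same. intro t. apply integrand_cont; auto.
Qed.

Lemma integrand_shift B H s : H <> 0 -> zu_integrand B H (s + cc H) = ZP B H s.
Proof.
  intros hH. unfold zu_integrand, ZP, rr, DD, cc.
  replace (H * (s + 3 * PI / (2 * H))) with (H*s + 3*PI/2) by (field; auto).
  rewrite sin_shift. f_equal; [ring | f_equal; ring].
Qed.

Lemma Zf_der B H s : 0 < B < 1 -> H <> 0 -> is_derive (Zf B H) s (ZP B H s).
Proof.
  intros hB hH. unfold Zf.
  rewrite <- (integrand_shift B H s hH).
  assert (Hd : is_derive (fun b => RInt (zu_integrand B H) (cc H) b) (s + cc H) (zu_integrand B H (s + cc H))).
  { apply (is_derive_RInt (zu_integrand B H) (fun b => RInt (zu_integrand B H) (cc H) b) (cc H)).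
    - apply filter_forall. intro b. apply (RInt_correct (V:=R_CompleteNormedModule)). apply (ex_RInt_continuous (V:=R_CompleteNormedModule)).
      intros z _. apply continuity_pt_filterlim. apply integrand_cont; auto.
    - apply continuity_pt_filterlim. apply integrand_cont; auto. }
  assert (Hg : is_derive (fun s => s + cc H) s 1) by (auto_derive; try split; try ring; try exact I).
  pose proof (is_derive_comp _ (fun s => s + cc H) s _ _ Hd Hg) as Hc. simpl in Hc. unfold scal in Hc; simpl in Hc. unfold mult in Hc; simpl in Hc.
  rewrite Rmult_1_l in Hc. exact Hc.
Qed.

Lemma xu_X0 B H : xu B H = X0 B H.
Proof.
  apply functional_extensionality. intro s. unfold xu, X0, rr, DD.
  rewrite sin_shift. f_equal. f_equal. ring.
Qed.

Lemma mvt (f f' : R -> R) a b : (forall u, is_derive f u (f' u)) -> a < b ->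
  exists c, a < c < b /\ f b - f a = f' c * (b - a).
Proof.
  intros Hd hab. destruct (MVT_cor2 f f' a b hab) as [c [Hc1 Hc2]].
  - intros c _. apply is_derive_Reals. apply Hd.
  - exists c. split; auto.
Qed.

Lemma const_zero (f : R -> R) a b : (forall u, is_derive f u 0) -> f a = f b.
Proof.
  intros Hd. destruct (Rtotal_order a b) as [h|[h|h]].
  - destruct (mvt f (fun _ => 0) a b Hd h) as [c [_ E]]. lra.
  - subst; auto.
  - destruct (mvt f (fun _ => 0) b a Hd h) as [c [_ E]]. lra.
Qed.

Lemma cosHn H s : cos (H*(-s)) = cos (H*s).
Proof. replace (H*(-s)) with (-(H*s)) by ring. apply cos_neg. Qed.
Lemma sinHn H s : sin (H*(-s)) = - sin (H*s).
Proof. replace (H*(-s)) with (-(H*s)) by ring. apply sin_neg. Qed.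

Lemma rr_even B H s : rr B H (-s) = rr B H s.
Proof. unfold rr, DD. rewrite cosHn. auto. Qed.
Lemma X0_even B H s : X0 B H (-s) = X0 B H s.
Proof. unfold X0. rewrite rr_even. auto. Qed.
Lemma XP_odd B H s : XP B H (-s) = - XP B H s.
Proof. unfold XP. rewrite rr_even, sinHn. unfold Rdiv. ring. Qed.
Lemma ZP_even B H s : ZP B H (-s) = ZP B H s.
Proof. unfold ZP. rewrite rr_even, cosHn. auto. Qed.

Lemma ZP_pos B H s : 0 < B < 1 -> 0 < ZP B H s.
Proof.
  intros hB. unfold ZP. pose proof (rr_pos B H s hB). pose proof (COS_bound (H*s)).
  apply Rdiv_lt_0_compat; nra.
Qed.

Lemma Zf_0 B H : Zf B H 0 = 0.
Proof. unfold Zf. rewrite Rplus_0_l. exact (RInt_point (V:=R_CompleteNormedModule) _ _). Qed.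

Lemma Zf_odd B H s : 0 < B < 1 -> H <> 0 -> Zf B H (-s) = - Zf B H s.
Proof.
  intros hB hH.
  assert (E : forall u, is_derive (fun u => Zf B H u + Zf B H (-u)) u 0).
  { intro u. pose proof (Zf_der B H u hB hH) as d1.
    assert (d2 : is_derive (fun u => Zf B H (-u)) u (- ZP B H u)).
    { assert (Hg : is_derive (fun u : R => -u) u (-1)) by (auto_derive; try split; try ring; try exact I).
      pose proof (is_derive_comp (Zf B H) (fun u => -u) u _ _ (Zf_der B H (-u) hB hH) Hg) as Hc.
      unfold scal in Hc; simpl in Hc; unfold mult in Hc; simpl in Hc. rewrite ZP_even in Hc.
      replace (- ZP B H u) with (-1 * ZP B H u) by ring. exact Hc. }
    pose proof (is_derive_plus _ _ _ _ _ d1 d2) as d3. unfold plus in d3; simpl in d3.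
    replace 0 with (ZP B H u + - ZP B H u) by ring. exact d3. }
  pose proof (const_zero _ s 0 E) as C. simpl in C. rewrite Ropp_0, Zf_0 in C. lra.
Qed.

Lemma Zf_pos B H s : 0 < B < 1 -> H <> 0 -> 0 < s -> 0 < Zf B H s.
Proof.
  intros hB hH hs. destruct (mvt (Zf B H) (ZP B H) 0 s (fun u => Zf_der B H u hB hH) hs) as [c [_ E]].
  rewrite Zf_0 in E. pose proof (ZP_pos B H c hB). nra.
Qed.

Lemma Zf_incr B H a b : 0 < B < 1 -> H <> 0 -> a < b -> Zf B H a < Zf B H b.
Proof.
  intros hB hH hs. destruct (mvt (Zf B H) (ZP B H) a b (fun u => Zf_der B H u hB hH) hs) as [c [_ E]].
  pose proof (ZP_pos B H c hB). nra.
Qed.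

Definition KK B H s := XPP B H s * ZP B H s - XP B H s * ZPP B H s.
Lemma KK_val B H s : 0 < B < 1 -> KK B H s = H*B*(cos(H*s) - B) / (rr B H s * rr B H s).
Proof.
  intros hB. pose proof (rr_pos B H s hB). pose proof (sin2 (H*s)) as S.
  unfold KK, XPP, XP, ZP, ZPP. unfold Rsqr in S.
  set (c := cos (H*s)) in *. set (sn := sin (H*s)) in *. set (r := rr B H s) in *.
  field_simplify_eq; [| lra].
  replace (sn ^ 2) with (1 - c*c) by (rewrite <- S; ring). ring.
Qed.

Lemma unit_speed B H s : 0 < B < 1 -> XP B H s ^ 2 + ZP B H s ^ 2 = 1.
Proof.
  intros hB. pose proof (rr_pos B H s hB). pose proof (rr_sq B H s hB) as R2.
  pose proof (sin2 (H*s)) as S. unfold Rsqr in S. unfold XP, ZP. unfold DD in R2.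
  set (c := cos (H*s)) in *. set (sn := sin (H*s)) in *. set (r := rr B H s) in *.
  field_simplify_eq; [| lra]. replace (sn ^ 2) with (1 - c*c) by (rewrite <- S; ring).
  replace (r ^ 2) with (r*r) by ring. rewrite R2. ring.
Qed.

Definition GG B H s := X0 B H s - XP B H s / ZP B H s * Zf B H s.

Lemma gu_GG B H : 0 < B < 1 -> H <> 0 -> gu B H = GG B H.
Proof.
  intros hB hH. apply functional_extensionality. intro s. unfold gu, GG.
  rewrite xu_X0, zu_Zf by auto.
  rewrite (deriv_eq _ _ _ (X0_der B H s hB hH)). rewrite (deriv_eq _ _ _ (Zf_der B H s hB hH)). auto.
Qed.

Lemma GG_der B H s : 0 < B < 1 -> H <> 0 ->
  is_derive (GG B H) s (- Zf B H s * KK B H s / ZP B H s ^ 2).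
Proof.
  intros hB hH. unfold GG.
  pose proof (ZP_pos B H s hB).
  assert (E1 : Derive (fun x => X0 B H x) s = XP B H s) by (apply is_derive_unique, X0_der; auto).
  assert (E2 : Derive (fun x => XP B H x) s = XPP B H s) by (apply is_derive_unique, XP_der; auto).
  assert (E3 : Derive (fun x => ZP B H x) s = ZPP B H s) by (apply is_derive_unique, ZP_der; auto).
  assert (E4 : Derive (fun x => Zf B H x) s = ZP B H s) by (apply is_derive_unique, Zf_der; auto).
  auto_derive.
  - split; [eexists; apply X0_der; [exact hB|exact hH]|].
    split; [eexists; apply XP_der; exact hB|].
    split; [eexists; apply ZP_der; exact hB|].
    split; [lra|]. split; [eexists; apply Zf_der; [exact hB|exact hH]|exact I].
  - rewrite E1, E2, E3, E4. unfold KK. field. lra.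
Qed.

Lemma acos_B B : 0 < B < 1 -> 0 < acos B < PI /\ cos (acos B) = B /\ sin (acos B) = sqrt (1 - B^2).
Proof.
  intros hB. pose proof (acos_bound B) as [a1 a2].
  assert (cB : cos (acos B) = B) by (apply cos_acos; lra).
  split; [|split; auto].
  - split.
    + destruct (Req_dec (acos B) 0) as [e|e]; [|lra]. rewrite e, cos_0 in cB. lra.
    + destruct (Req_dec (acos B) PI) as [e|e]; [|lra]. rewrite e, cos_PI in cB. lra.
  - rewrite sin_acos by lra. f_equal. unfold Rsqr. ring.
Qed.

Lemma angle B H s : 0 < B < 1 -> 0 < H -> 0 <= s <= s0 B H ->
  0 <= H*s <= acos B /\ B <= cos (H*s) /\ 0 <= sin (H*s).
Proof.
  intros hB hH [h1 h2]. destruct (acos_B B hB) as [[a1 a2] [cB sB]].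
  unfold s0 in h2.
  assert (hs : 0 <= H*s <= acos B).
  { split; [nra|]. apply (Rmult_le_compat_l H) in h2; [|lra].
    replace (H * (/H * acos B)) with (acos B) in h2 by (field; lra). lra. }
  split; auto. split.
  - rewrite <- cB at 1. apply cos_decr_1; lra.
  - apply sin_ge_0; lra.
Qed.

Lemma KK_nonneg B H s : 0 < B < 1 -> 0 < H -> 0 <= s <= s0 B H -> 0 <= KK B H s.
Proof.
  intros hB hH hs. rewrite KK_val by auto. destruct (angle B H s hB hH hs) as [_ [c _]].
  pose proof (rr_pos B H s hB). apply Rmult_le_pos; [|left; apply Rinv_0_lt_compat; nra].
  apply Rmult_le_pos; [|lra]. nra.
Qed.

Lemma GG_mono B H a b : 0 < B < 1 -> 0 < H -> 0 <= a -> a <= b -> b <= s0 B H -> GG B H b <= GG B H a.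
Proof.
  intros hB hH ha hab hb. destruct (Req_dec a b) as [e|e]; [subst; lra|].
  assert (hne : H <> 0) by lra.
  destruct (mvt (GG B H) _ a b (fun u => GG_der B H u hB hne)) as [c [[c1 c2] E]]; [lra|].
  assert (0 <= KK B H c) by (apply KK_nonneg; auto; lra).
  pose proof (Zf_pos B H c hB hne ltac:(lra)). pose proof (ZP_pos B H c hB).
  assert (0 <= Zf B H c * KK B H c / ZP B H c ^ 2).
  { apply Rmult_le_pos; [nra|]. left. apply Rinv_0_lt_compat. nra. }
  assert (- Zf B H c * KK B H c / ZP B H c ^ 2 = - (Zf B H c * KK B H c / ZP B H c ^ 2)) by (unfold Rdiv; ring).
  nra.
Qed.

Lemma GG_0 B H : 0 < B < 1 -> 0 < H -> 0 < GG B H 0.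
Proof.
  intros hB hH. unfold GG. rewrite Zf_0. unfold X0. pose proof (rr_pos B H 0 hB).
  assert (0 < / H) by (apply Rinv_0_lt_compat; lra). nra.
Qed.

Lemma GG_even B H s : 0 < B < 1 -> H <> 0 -> GG B H (-s) = GG B H s.
Proof.
  intros hB hH. unfold GG. rewrite X0_even, XP_odd, ZP_even, Zf_odd by auto.
  unfold Rdiv. ring.
Qed.

Lemma GG_s0 B H : 0 < B < 1 -> 0 < H ->
  GG B H (s0 B H) * (H * (1 - B^2)) = sqrt (1 - B^2) * ((1 - B^2) - H * B * Zf B H (s0 B H)).
Proof.
  intros hB hH. destruct (acos_B B hB) as [_ [cB sB]].
  assert (E : H * s0 B H = acos B) by (unfold s0; field; lra).
  assert (hm : 0 < 1 - B^2) by nra.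
  pose proof (sqrt_lt_R0 _ hm) as hm'. pose proof (sqrt_sqrt _ (Rlt_le _ _ hm)) as hm2.
  assert (Er : rr B H (s0 B H) = sqrt (1 - B^2)).
  { unfold rr, DD. rewrite E, cB. f_equal. ring. }
  unfold GG, X0, XP, ZP. rewrite Er, E, cB, sB.
  set (Z := Zf B H (s0 B H)). set (m := sqrt (1 - B^2)) in *.
  field_simplify_eq; [| split; [lra|]; split; [|lra]; nra].
  ring.
Qed.

Lemma der_mulc (a : R -> R) a' k s : is_derive a s a' -> deriv (fun u => a u * k) s = a' * k.
Proof.
  intro Hd. apply deriv_eq. apply (is_derive_ext (fun u => k * a u)).
  - intro; simpl; ring.
  - rewrite Rmult_comm. apply is_derive_scal; auto.
Qed.

Lemma der_cmul c (p : R -> R) p' th : is_derive p th p' -> deriv (fun u => c * p u) th = c * p'.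
Proof. intro Hd. apply deriv_eq. apply is_derive_scal; auto. Qed.

Lemma der_const c th : deriv (fun _ => c) th = 0.
Proof. apply deriv_eq. exact (is_derive_const (K:=R_AbsRing) (V:=R_NormedModule) c th). Qed.

Lemma der_id (b : R -> R) b' s : is_derive b s b' -> deriv (fun u => b u) s = b'.
Proof. intro; apply deriv_eq; auto. Qed.

Definition Fam (a b p q : R -> R) : R -> R -> V3 :=
  fun s th => mk3 (a s * p th) (a s * q th) (b s).

Lemma ds_Fam (a b p q a' b' : R -> R) : (forall u, is_derive a u (a' u)) -> (forall u, is_derive b u (b' u)) ->
  d_s (Fam a b p q) = Fam a' b' p q.
Proof.
  intros Ha Hb. apply functional_extensionality; intro s. apply functional_extensionality; intro th.
  unfold d_s, Fam, Defs.c1, c2, c3, mk3. simpl.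
  rewrite (der_mulc a (a' s) (p th) s (Ha s)), (der_mulc a (a' s) (q th) s (Ha s)), (der_id b (b' s) s (Hb s)).
  reflexivity.
Qed.

Lemma dth_Fam (a b p q p' q' : R -> R) : (forall u, is_derive p u (p' u)) -> (forall u, is_derive q u (q' u)) ->
  d_th (Fam a b p q) = Fam a (fun _ => 0) p' q'.
Proof.
  intros Hp Hq. apply functional_extensionality; intro s. apply functional_extensionality; intro th.
  unfold d_th, Fam, Defs.c1, c2, c3, mk3. simpl.
  rewrite (der_cmul (a s) p (p' th) th (Hp th)), (der_cmul (a s) q (q' th) th (Hq th)), der_const.
  reflexivity.
Qed.

Lemma cos_d u : is_derive cos u (- sin u).
Proof. apply is_derive_Reals. apply derivable_pt_lim_cos. Qed.
Lemma sin_d u : is_derive sin u (cos u).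
Proof. apply is_derive_Reals. apply derivable_pt_lim_sin. Qed.
Lemma nsin_d u : is_derive (fun t => - sin t) u (- cos u).
Proof. apply is_derive_Reals. apply derivable_pt_lim_opp. apply derivable_pt_lim_sin. Qed.
Lemma zero_d u : is_derive (fun _ : R => 0) u 0.
Proof. exact (is_derive_const (K:=R_AbsRing) (V:=R_NormedModule) 0 u). Qed.

Lemma revN_eq B H : 0 < B < 1 -> H <> 0 ->
  revN (X0 B H) (Zf B H) = fun s th => mk3 (- ZP B H s * cos th) (- ZP B H s * sin th) (XP B H s).
Proof.
  intros hB hH. apply functional_extensionality; intro s. apply functional_extensionality; intro th.
  unfold revN. rewrite (deriv_eq _ _ _ (X0_der B H s hB hH)), (deriv_eq _ _ _ (Zf_der B H s hB hH)). auto.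
Qed.

Lemma geom B H s th : 0 < B < 1 -> 0 < H ->
  let X := rev (X0 B H) (Zf B H) in
  let N := revN (X0 B H) (Zf B H) in
  fE X s th = 1 /\ fF X s th = 0 /\ fG X s th = X0 B H s ^ 2 /\
  IIss X N s th = - KK B H s /\ IIst X N s th = 0 /\ IIts X N s th = 0 /\
  IItt X N s th = X0 B H s * ZP B H s /\
  dot (N s th) (N s th) = 1 /\ dot (N s th) (d_s X s th) = 0 /\ dot (N s th) (d_th X s th) = 0 /\
  dot (X s th) (X s th) = X0 B H s ^ 2 + Zf B H s ^ 2 /\
  dot (X s th) (N s th) = - X0 B H s * ZP B H s + Zf B H s * XP B H s.
Proof.
  intros hB hH0. assert (hH : H <> 0) by lra. intros X N.
  assert (hX : X = Fam (X0 B H) (Zf B H) cos sin) by reflexivity.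
  assert (hds : d_s X = Fam (XP B H) (ZP B H) cos sin).
  { rewrite hX. apply ds_Fam; intro u; [apply X0_der|apply Zf_der]; auto. }
  assert (hdt : d_th X = Fam (X0 B H) (fun _ => 0) (fun t => - sin t) cos).
  { rewrite hX. apply dth_Fam; intro u; [apply cos_d|apply sin_d]. }
  assert (hdss : d_s (d_s X) = Fam (XPP B H) (ZPP B H) cos sin).
  { rewrite hds. apply ds_Fam; intro u; [apply XP_der|apply ZP_der]; auto. }
  assert (hdts : d_th (d_s X) = Fam (XP B H) (fun _ => 0) (fun t => - sin t) cos).
  { rewrite hds. apply dth_Fam; intro u; [apply cos_d|apply sin_d]. }
  assert (hdst : d_s (d_th X) = Fam (XP B H) (fun _ => 0) (fun t => - sin t) cos).
  { rewrite hdt. apply ds_Fam; intro u; [apply X0_der; auto|apply zero_d]. }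
  assert (hdtt : d_th (d_th X) = Fam (X0 B H) (fun _ => 0) (fun t => - cos t) (fun t => - sin t)).
  { rewrite hdt. apply dth_Fam; intro u; [apply nsin_d|apply cos_d]. }
  assert (hN : N = fun s th => mk3 (- ZP B H s * cos th) (- ZP B H s * sin th) (XP B H s))
    by (apply revN_eq; auto).
  unfold fE, fF, fG, IIss, IIst, IIts, IItt.
  rewrite hdss, hdts, hdst, hdtt, hds, hdt, hN, hX.
  unfold Fam, dot, Defs.c1, c2, c3, mk3; simpl.
  pose proof (sin2_cos2 th) as T. unfold Rsqr in T.
  pose proof (unit_speed B H s hB) as U. unfold KK.
  assert (T1 : XPP B H s * ZP B H s * (sin th * sin th + cos th * cos th) = XPP B H s * ZP B H s) by (rewrite T; ring).
  assert (T2 : X0 B H s * ZP B H s * (sin th * sin th + cos th * cos th) = X0 B H s * ZP B H s) by (rewrite T; ring).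
  assert (T3 : XP B H s * ZP B H s * (sin th * sin th + cos th * cos th) = XP B H s * ZP B H s) by (rewrite T; ring).
  repeat split; try nra; lra.
Qed.

Lemma geom2 B H s th : 0 < B < 1 -> 0 < H ->
  let X := rev (X0 B H) (Zf B H) in
  let N := revN (X0 B H) (Zf B H) in
  detg X s th = X0 B H s ^ 2 /\ meanH X N s th = H /\
  normPhi2 X N s th = (H * (1 - B^2) / (rr B H s * rr B H s)) ^ 2 / 2.
Proof.
  intros hB hH X N.
  destruct (geom B H s th hB hH) as [gE [gF [gG [gss [gst [gts [gtt _]]]]]]].
  fold X N in gE, gF, gG, gss, gst, gts, gtt.
  pose proof (rr_pos B H s hB) as hr. pose proof (rr_sq B H s hB) as hr2.
  assert (KV := KK_val B H s hB).
  assert (hd : detg X s th = X0 B H s ^ 2) by (unfold detg; rewrite gE, gF, gG; ring).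
  assert (hx : X0 B H s = / H * rr B H s) by reflexivity.
  assert (hz : ZP B H s = (1 - B*cos(H*s)) / rr B H s) by reflexivity.
  assert (hx0 : 0 < X0 B H s) by (rewrite hx; apply Rmult_lt_0_compat; [apply Rinv_0_lt_compat|]; lra).
  assert (w11 : W11 X N s th = - KK B H s) by (unfold W11; rewrite hd, gG, gss, gF, gts; field; lra).
  assert (w22 : W22 X N s th = ZP B H s / X0 B H s) by (unfold W22; rewrite hd, gE, gtt, gF, gst; field; lra).
  assert (w12 : W12 X N s th = 0) by (unfold W12; rewrite hd, gG, gst, gF; field; lra).
  assert (w21 : W21 X N s th = 0) by (unfold W21; rewrite hd, gE, gts, gF; field; lra).
  unfold DD in hr2.
  split; [exact hd|]. split.
  - unfold meanH. rewrite w11, w22, KV, hx, hz. field_simplify_eq; [|split; lra].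
    replace (rr B H s ^ 2) with (rr B H s * rr B H s) by ring. rewrite hr2. ring.
  - unfold normPhi2, normA2, meanH. rewrite w11, w22, w12, w21, KV, hx, hz.
    field_simplify_eq; [ring|split; lra].
Qed.

Lemma X0_pos B H s : 0 < B < 1 -> 0 < H -> 0 < X0 B H s.
Proof.
  intros hB hH. unfold X0. pose proof (rr_pos B H s hB).
  apply Rmult_lt_0_compat; [apply Rinv_0_lt_compat|]; lra.
Qed.

Lemma XP_nonneg B H s : 0 < B < 1 -> 0 < H -> 0 <= s <= s0 B H -> 0 <= XP B H s.
Proof.
  intros hB hH hs. destruct (angle B H s hB hH hs) as [_ [_ hsn]].
  unfold XP. pose proof (rr_pos B H s hB). apply Rmult_le_pos; [nra|left; apply Rinv_0_lt_compat; lra].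
Qed.

Lemma XP_pos B H s : 0 < B < 1 -> 0 < H -> 0 < s < s0 B H -> 0 < XP B H s.
Proof.
  intros hB hH hs. destruct (angle B H s hB hH ltac:(lra)) as [[a1 a2] _].
  destruct (acos_B B hB) as [[b1 b2] _].
  assert (0 < sin (H*s)) by (apply sin_gt_0; nra).
  unfold XP. pose proof (rr_pos B H s hB). apply Rmult_lt_0_compat; [nra|apply Rinv_0_lt_compat; lra].
Qed.

Lemma hh_incr B H a b : 0 < B < 1 -> 0 < H -> 0 <= a -> a < b -> b <= s0 B H ->
  X0 B H a ^ 2 + Zf B H a ^ 2 < X0 B H b ^ 2 + Zf B H b ^ 2.
Proof.
  intros hB hH ha hab hb. assert (hne : H <> 0) by lra.
  assert (Hd : forall u, is_derive (fun u => X0 B H u ^ 2 + Zf B H u ^ 2) u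
                 (2 * X0 B H u * XP B H u + 2 * Zf B H u * ZP B H u)).
  { intro u.
    assert (E1 : Derive (fun x => X0 B H x) u = XP B H u) by (apply is_derive_unique, X0_der; auto).
    assert (E4 : Derive (fun x => Zf B H x) u = ZP B H u) by (apply is_derive_unique, Zf_der; auto).
    auto_derive.
    - split; [eexists; apply X0_der; [exact hB|exact hne]|].
      split; [eexists; apply Zf_der; [exact hB|exact hne]|exact I].
    - rewrite E1, E4. ring. }
  destruct (mvt _ _ a b Hd hab) as [c [[c1 c2] E]]. simpl in E.
  pose proof (X0_pos B H c hB hH). pose proof (XP_pos B H c hB hH ltac:(lra)).
  pose proof (Zf_pos B H c hB hne ltac:(lra)). pose proof (ZP_pos B H c hB).
  assert (0 < 2 * X0 B H c * XP B H c + 2 * Zf B H c * ZP B H c) by nra.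
  nra.
Qed.

Lemma ZfXP_nonneg B H s sb : 0 < B < 1 -> 0 < H -> sb <= s0 B H -> - sb <= s <= sb ->
  0 <= Zf B H s * XP B H s.
Proof.
  intros hB hH hsb hs. assert (hne : H <> 0) by lra.
  destruct (Rle_lt_dec 0 s) as [h|h].
  - pose proof (XP_nonneg B H s hB hH ltac:(lra)).
    destruct (Req_dec s 0) as [e|e]; [subst; rewrite Zf_0; lra|].
    pose proof (Zf_pos B H s hB hne ltac:(lra)). nra.
  - pose proof (XP_nonneg B H (-s) hB hH ltac:(lra)). pose proof (Zf_pos B H (-s) hB hne ltac:(lra)).
    rewrite XP_odd, Zf_odd in * by auto. nra.
Qed.

Lemma GG_nonneg B H s sb : 0 < B < 1 -> 0 < H -> sb <= s0 B H -> GG B H sb = 0 -> - sb <= s <= sb ->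
  0 <= GG B H s.
Proof.
  intros hB hH hsb hg hs. assert (hne : H <> 0) by lra.
  destruct (Rle_lt_dec 0 s) as [h|h].
  - pose proof (GG_mono B H s sb hB hH h ltac:(lra) hsb). lra.
  - rewrite <- GG_even by auto. pose proof (GG_mono B H (-s) sb hB hH ltac:(lra) ltac:(lra) hsb). lra.
Qed.

Lemma pinch_alg B c D a : 0 < B < 1 -> -1 <= c <= 1 -> D = 1 + B^2 - 2*B*c -> 0 <= a <= 1 - B*c ->
  ((1 - B^2) * a / D) ^ 2 <= (2 - a) ^ 2.
Proof.
  intros hB hc hD ha.
  assert (hDp : 0 < D) by (subst; nra).
  assert (hb2 : 0 <= 1 - B^2) by nra.
  assert (u0 : 0 <= (1 - B^2) * a / D) by (apply Rmult_le_pos; [apply Rmult_le_pos; lra|left; apply Rinv_0_lt_compat; lra]).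
  assert (u1 : (1 - B^2) * a / D <= 2 - a).
  { apply (Rmult_le_reg_r D); [lra|]. unfold Rdiv. rewrite Rmult_assoc, Rinv_l by lra.
    assert (hcc : 0 <= 1 - c*c) by nra.
    assert ((1 - B*c)^2 <= D) by (subst; nra).
    assert (0 <= 1 - B*c) by nra.
    assert (a * (1 - B*c) <= (1 - B*c)^2) by nra.
    replace ((1 - B ^ 2) * a * 1) with (2*a*(1-B*c) - a*D) by (subst; ring). nra. }
  apply pow_incr. lra.
Qed.

Lemma p_id B H s : 0 < B < 1 -> 0 < H ->
  - X0 B H s * ZP B H s + Zf B H s * XP B H s = - ZP B H s * GG B H s /\
  H * (X0 B H s * ZP B H s) = 1 - B * cos (H*s).
Proof.
  intros hB hH. pose proof (ZP_pos B H s hB). pose proof (rr_pos B H s hB). split.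
  - unfold GG. field. lra.
  - unfold X0, ZP. field. lra.
Qed.

Theorem proposition3p4 (B H : R) (hB0 : 0 < B) (hB1 : B < 1) (hH : 0 < H) :
  (zu B H (s0 B H) < z0 B H ->
     forall s, 0 < s < s0 B H -> gu B H s > 0) /\
  (zu B H (s0 B H) >= z0 B H ->
     exists sb, 0 < sb <= s0 B H /\
       gu B H sb = 0 /\ gu B H (- sb) = 0 /\
       let R0 := sqrt (xu B H sb ^ 2 + zu B H sb ^ 2) in
       free_boundary_CMC_annulus_rev (xu B H) (zu B H) sb H R0 /\
       (forall s th, - sb <= s <= sb ->
          let X := rev (xu B H) (zu B H) in
          let N := revN (xu B H) (zu B H) in
          normPhi2 X N s th * (dot (X s th) (N s th)) ^ 2
            <= / 2 * (2 + H * dot (X s th) (N s th)) ^ 2)).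
Proof.
  assert (hB : 0 < B < 1) by lra. assert (hne : H <> 0) by lra.
  rewrite (gu_GG B H hB hne), (zu_Zf B H hB), xu_X0.
  pose proof (GG_s0 B H hB hH) as GS.
  assert (hm : 0 < 1 - B^2) by nra. pose proof (sqrt_lt_R0 _ hm) as hm'.
  set (S0 := s0 B H) in *. set (Z := Zf B H S0) in *.
  assert (hS0 : 0 < S0).
  { destruct (acos_B B hB) as [[a1 _] _]. unfold S0, s0.
    apply Rmult_lt_0_compat; [apply Rinv_0_lt_compat|]; lra. }
  assert (hz0 : z0 B H * (H * B) = 1 - B^2) by (unfold z0; field; lra).
  split.
  - intros hz s [h1 h2].
    assert (hZ : H * B * Z < 1 - B^2).
    { rewrite <- hz0. assert (0 < H*B) by nra. nra. }
    assert (hG : 0 < GG B H S0).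
    { assert (0 < sqrt (1 - B^2) * (1 - B^2 - H*B*Z)) by (apply Rmult_lt_0_compat; lra).
      assert (0 < H * (1 - B^2)) by nra. nra. }
    pose proof (GG_mono B H s S0 hB hH ltac:(lra) ltac:(lra) (Rle_refl _)). lra.
  - intros hz.
    assert (hZ : 1 - B^2 <= H * B * Z).
    { rewrite <- hz0. assert (0 < H*B) by nra. nra. }
    assert (hG : GG B H S0 <= 0).
    { assert (sqrt (1 - B^2) * (1 - B^2 - H*B*Z) <= 0).
      { assert (0 <= sqrt (1 - B^2) * (H*B*Z - (1 - B^2))) by (apply Rmult_le_pos; lra). nra. }
      assert (0 < H * (1 - B^2)) by nra. nra. }
    assert (hc : continuity (GG B H)).
    { intro x. apply continuity_pt_filterlim.
      apply (ex_derive_continuous (K:=R_AbsRing) (V:=R_NormedModule)).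
      eexists. apply GG_der; auto. }
    pose proof (GG_0 B H hB hH) as hG0.
    destruct (IVT_cor (GG B H) 0 S0 hc ltac:(lra) ltac:(nra)) as [sb [[sb1 sb2] hsb]].
    assert (sbpos : 0 < sb).
    { destruct (Req_dec sb 0) as [e|e]; [rewrite e in hsb; lra|lra]. }
    exists sb. split; [lra|]. split; [exact hsb|]. split; [rewrite GG_even; auto|].
    intro R0.
    assert (hR0sq : R0 ^ 2 = X0 B H sb ^ 2 + Zf B H sb ^ 2).
    { unfold R0. apply pow2_sqrt. nra. }
    assert (hR0 : 0 < R0).
    { unfold R0. apply sqrt_lt_R0. pose proof (X0_pos B H sb hB hH). nra. }
    split.
    + unfold free_boundary_CMC_annulus_rev. cbv zeta. set (X := rev (X0 B H) (Zf B H)). set (N := revN (X0 B H) (Zf B H)).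
      split; [lra|]. split; [lra|]. split; [intros; apply X0_pos; auto|].
      split.
      { intros s1 s2 _ _ _ E.
        destruct (Rtotal_order s1 s2) as [h|[h|h]]; auto.
        - pose proof (Zf_incr B H s1 s2 hB hne h). lra.
        - pose proof (Zf_incr B H s2 s1 hB hne h). lra. }
      split.
      { intros s th _. destruct (geom B H s th hB hH) as [_ [_ [_ [_ [_ [_ [_ [g1 [g2 [g3 _]]]]]]]]]].
        destruct (geom2 B H s th hB hH) as [d1 _]. fold X N in g1, g2, g3, d1.
        pose proof (X0_pos B H s hB hH). rewrite d1. repeat split; auto; nra. }
      split.
      { intros s th _. destruct (geom2 B H s th hB hH) as [_ [d2 _]]. exact d2. }
      split.
      { intros s th hs. destruct (geom B H s th hB hH) as [_ [_ [_ [_ [_ [_ [_ [_ [_ [_ [g4 _]]]]]]]]]]].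
        fold X in g4. rewrite g4, hR0sq.
        destruct (Rle_lt_dec 0 s) as [h|h].
        - apply hh_incr; auto; lra.
        - rewrite <- X0_even, <- (Rsqr_pow2 (Zf B H s)).
          replace (Zf B H s) with (- Zf B H (-s)) by (rewrite Zf_odd by auto; ring).
          rewrite <- Rsqr_neg, Rsqr_pow2.
          apply hh_incr; auto; lra. }
      split.
      { intro th. destruct (geom B H sb th hB hH) as [_ [_ [_ [_ [_ [_ [_ [_ [_ [_ [g4 _]]]]]]]]]]].
        destruct (geom B H (-sb) th hB hH) as [_ [_ [_ [_ [_ [_ [_ [_ [_ [_ [g5 _]]]]]]]]]]].
        fold X in g4, g5. rewrite g4, g5, hR0sq, X0_even, Zf_odd by auto. split; ring. }
      { intro th. destruct (geom B H sb th hB hH) as [_ [_ [_ [_ [_ [_ [_ [_ [_ [_ [_ g4]]]]]]]]]]].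
        destruct (geom B H (-sb) th hB hH) as [_ [_ [_ [_ [_ [_ [_ [_ [_ [_ [_ g5]]]]]]]]]]].
        fold X N in g4, g5. rewrite g4, g5.
        destruct (p_id B H sb hB hH) as [p1 _]. destruct (p_id B H (-sb) hB hH) as [p2 _].
        rewrite p1, p2, GG_even, hsb by auto. split; ring. }
    + intros s th hs X N.
      destruct (geom B H s th hB hH) as [_ [_ [_ [_ [_ [_ [_ [_ [_ [_ [_ g4]]]]]]]]]]].
      destruct (geom2 B H s th hB hH) as [_ [_ d3]]. fold X N in g4, d3.
      rewrite g4, d3.
      destruct (p_id B H s hB hH) as [p1 p2].
      pose proof (GG_nonneg B H s sb hB hH sb2 hsb hs) as gn.
      pose proof (ZfXP_nonneg B H s sb hB hH sb2 hs) as zx.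
      pose proof (ZP_pos B H s hB) as zp.
      pose proof (rr_sq B H s hB) as r2. pose proof (rr_pos B H s hB) as rp.
      set (a := H * (X0 B H s * ZP B H s) - H * (Zf B H s * XP B H s)).
      assert (ha : 0 <= a <= 1 - B * cos (H*s)).
      { split.
        - unfold a. replace (H * (X0 B H s * ZP B H s) - H * (Zf B H s * XP B H s))
            with (- H * (- X0 B H s * ZP B H s + Zf B H s * XP B H s)) by ring.
          rewrite p1. replace (- H * (- ZP B H s * GG B H s)) with (H * (ZP B H s * GG B H s)) by ring.
          apply Rmult_le_pos; [lra|]. apply Rmult_le_pos; lra.
        - unfold a. rewrite p2. assert (0 <= H * (Zf B H s * XP B H s)) by (apply Rmult_le_pos; lra). lra. }
      pose proof (pinch_alg B (cos (H*s)) (DD B H s) a hB (COS_bound (H*s)) eq_refl ha) as PA.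
      assert (E1 : H * (- X0 B H s * ZP B H s + Zf B H s * XP B H s) = - a) by (unfold a; ring).
      replace ((H * (1 - B ^ 2) / (rr B H s * rr B H s)) ^ 2 / 2 * (- X0 B H s * ZP B H s + Zf B H s * XP B H s) ^ 2)
        with (((1 - B^2) * (H * (- X0 B H s * ZP B H s + Zf B H s * XP B H s)) / (rr B H s * rr B H s)) ^ 2 / 2)
        by (field; lra).
      rewrite E1, r2.
      replace ((1 - B ^ 2) * - a / DD B H s) with (- ((1 - B ^ 2) * a / DD B H s)) by (field; pose proof (DD_pos B H s hB); lra).
      replace (2 + - a) with (2 - a) by ring.
      rewrite <- Rsqr_pow2, <- Rsqr_neg, Rsqr_pow2. lra.
Qed.
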